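(* Let $p$ be even, let $\mathcal{C}_0$ be a fixed two-sided $p$-periodic CMV matrix, and let $1\le q\le\infty$. There is a constant $C$ such that for any sequence of Verblunsky coefficients $\alpha=\{\alpha_n\}$, $$e^{-p}\bigl\|\tilde d_m(\alpha,\mathcal{T}_{\mathcal{C}_0})\bigr\|_{\ell^q}\le\bigl\|d_m(\alpha,\mathcal{T}_{\mathcal{C}_0})\bigr\|_{\ell^q}\le C\bigl\|\tilde d_m(\alpha,\mathcal{T}_{\mathcal{C}_0})\bigr\|_{\ell^q}.$$
   Context: Verblunsky coefficients are complex numbers $\alpha_n\in\mathbb{D}$. For $\alpha\in\mathbb{D}$, $\rho=(1-|\alpha|^2)^{1/2}$. A two-sided $p$-periodic CMV matrix $\mathcal{C}_0$ is determined by a $p$-periodic sequence $\{\alpha^{(0)}_n\}_{n\in\mathbb{Z}}\subset\mathbb{D}$; its discriminant is $\Delta_{\mathcal{C}_0}(z)=\mathrm{Tr}(z^{-p/2}M_{p-1}(z)\cdots M_0(z))$ with $M_n(z)=(\rho^{(0)}_n)^{-1}\begin{pmatrix}z&-\bar\alpha^{(0)}_n\\-\alpha^{(0)}_nz&1\end{pmatrix}$, and the isospectral torus $\mathcal{T}_{\mathcal{C}_0}$ is the set of $p$-periodic sequences in $\mathbb{D}$ with the same discriminant. $d_m(\alpha,\alpha')=\sum_{k=0}^\infty e^{-k}|\alpha_{m+k}-\alpha'_{m+k}|$ and $\tilde d_m(\alpha,\alpha')=\sum_{k=0}^{p}|\alpha_{m+k}-\alpha'_{m+k}|$; distances to $\mathcal{T}_{\mathcal{C}_0}$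 are infima over $\alpha'\in\mathcal{T}_{\mathcal{C}_0}$. The $\ell^q$ norms are over $m$. *)

(* Defs.v *)
From Stdlib Require Import Reals ZArith Lra.
From Coquelicot Require Import Coquelicot.
Open Scope R_scope.

Fixpoint Cpown (z : C) (n : nat) : C :=
  match n with O => RtoC 1 | S k => Cmult z (Cpown z k) end.

Definition rho (a : C) : R := sqrt (1 - (Cmod a) ^ 2).

Record M2 := mkM2 { m11 : C; m12 : C; m21 : C; m22 : C }.

Definition M2mul (A B : M2) : M2 :=
  mkM2 (Cplus (Cmult (m11 A) (m11 B)) (Cmult (m12 A) (m21 B)))
       (Cplus (Cmult (m11 A) (m12 B)) (Cmult (m12 A) (m22 B)))
       (Cplus (Cmult (m21 A) (m11 B)) (Cmult (m22 A) (m21 B)))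
       (Cplus (Cmult (m21 A) (m12 B)) (Cmult (m22 A) (m22 B))).

Definition M2id : M2 := mkM2 (RtoC 1) (RtoC 0) (RtoC 0) (RtoC 1).

Definition M2trace (A : M2) : C := Cplus (m11 A) (m22 A).

Definition Mtrans (a z : C) : M2 :=
  let c := RtoC (/ rho a) in
  mkM2 (Cmult c z) (Cmult c (Copp (Cconj a)))
       (Cmult c (Copp (Cmult a z))) c.

Fixpoint transfer (alpha : Z -> C) (z : C) (k : nat) : M2 :=
  match k with
  | O => M2id
  | S j => M2mul (Mtrans (alpha (Z.of_nat j)) z) (transfer alpha z j)
  end.

Definition discriminant (p : nat) (alpha : Z -> C) (z : C) : C :=
  Cmult (Cpown (Cinv z) (Nat.div p 2)) (M2trace (transfer alpha z p)).

Definition in_disk (a : C) : Prop := Cmod a < 1.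

Definition periodic (p : nat) (alpha : Z -> C) : Prop :=
  forall n : Z, alpha (n + Z.of_nat p)%Z = alpha n.

Definition iso_torus (p : nat) (alpha0 : Z -> C) (beta : Z -> C) : Prop :=
  periodic p beta /\ (forall n, in_disk (beta n)) /\
  (forall z : C, z <> RtoC 0 -> discriminant p beta z = discriminant p alpha0 z).

Definition dm (alpha : nat -> C) (beta : Z -> C) (m : nat) : R :=
  Series (fun k => exp (- INR k) * Cmod (Cminus (alpha (m + k)%nat) (beta (Z.of_nat (m + k))))).

Definition dtm (p : nat) (alpha : nat -> C) (beta : Z -> C) (m : nat) : R :=
  sum_f_R0 (fun k => Cmod (Cminus (alpha (m + k)%nat) (beta (Z.of_nat (m + k))))) p.

(* distances to the torus: infima over the torus (finite: torus nonempty,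
   distances nonnegative) *)
Definition dm_torus (p : nat) (alpha0 : Z -> C) (alpha : nat -> C) (m : nat) : R :=
  real (Glb_Rbar (fun x => exists beta, iso_torus p alpha0 beta /\ x = dm alpha beta m)).

Definition dtm_torus (p : nat) (alpha0 : Z -> C) (alpha : nat -> C) (m : nat) : R :=
  real (Glb_Rbar (fun x => exists beta, iso_torus p alpha0 beta /\ x = dtm p alpha beta m)).

Definition rpow (x r : R) : R := if Rle_dec x 0 then 0 else Rpower x r.

Definition Rbar_rpow (y : Rbar) (r : R) : Rbar :=
  match y with Finite x => Finite (rpow x r) | p_infty => p_infty | m_infty => m_infty end.

Definition lq_norm (q : Rbar) (x : nat -> R) : Rbar :=
  match q with
  | Finite r => Rbar_rpow (Lim_seq (fun N => sum_f_R0 (fun m => rpow (x m) r) N)) (/ r)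
  | p_infty => Lub_Rbar (fun y => exists m, y = x m)
  | m_infty => m_infty
  end.

(* Main.v *)
Require Import Defs.
From Stdlib Require Import Reals ZArith Lra Lia IndefiniteDescription Classical.
From Coquelicot Require Import Coquelicot.
Open Scope R_scope.


Lemma exp_le_mono x y : x <= y -> exp x <= exp y.
Proof. intros [H|H]. left; now apply exp_increasing. subst; lra. Qed.

Lemma rpow_ge0 x r : 0 <= rpow x r.
Proof. unfold rpow. destruct (Rle_dec x 0). lra. unfold Rpower. left; apply exp_pos. Qed.

Lemma rpow_pos x r : 0 < x -> rpow x r = Rpower x r.
Proof. intros H. unfold rpow. destruct (Rle_dec x 0). lra. auto. Qed.

Lemma rpow_0 r : rpow 0 r = 0.
Proof. unfold rpow. destruct (Rle_dec 0 0); lra. Qed.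

Lemma rpow_le x y r : 0 < r -> 0 <= x <= y -> rpow x r <= rpow y r.
Proof.
  intros Hr [Hx Hy]. destruct (Req_dec x 0) as [->|Hx0].
  rewrite rpow_0. apply rpow_ge0.
  rewrite !rpow_pos by lra. apply Rle_Rpower_l; lra.
Qed.

Lemma rpow_inv x r : 0 < r -> 0 <= x -> rpow (rpow x r) (/ r) = x.
Proof.
  intros Hr Hx. destruct (Req_dec x 0) as [->|Hx0].
  now rewrite !rpow_0.
  rewrite (rpow_pos x) by lra. rewrite rpow_pos.
  rewrite Rpower_mult. rewrite Rinv_r by lra. apply Rpower_1; lra.
  unfold Rpower; apply exp_pos.
Qed.

Lemma rpow_inv' x r : 0 < r -> 0 <= x -> rpow (rpow x (/ r)) r = x.
Proof.
  intros Hr Hx. rewrite <- (Rinv_inv r) at 2. apply rpow_inv; auto.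
  now apply Rinv_0_lt_compat.
Qed.

Lemma rpow_mult x y r : 0 <= x -> 0 <= y -> rpow (x * y) r = rpow x r * rpow y r.
Proof.
  intros Hx Hy.
  destruct (Req_dec x 0) as [->|Hx0]. rewrite Rmult_0_l, !rpow_0; lra.
  destruct (Req_dec y 0) as [->|Hy0]. rewrite Rmult_0_r, !rpow_0; lra.
  rewrite !rpow_pos by nra. now rewrite Rpower_mult_distr by lra.
Qed.

Lemma rpow_le_inv x y r : 0 < r -> 0 <= x -> 0 <= y -> rpow x r <= rpow y r -> x <= y.
Proof.
  intros Hr Hx Hy H.
  rewrite <- (rpow_inv x r), <- (rpow_inv y r) by auto.
  apply rpow_le. now apply Rinv_0_lt_compat. split; auto. apply rpow_ge0.
Qed.

Lemma rpow_small v r : 0 <= v <= 1 -> 1 <= r -> rpow v r <= v.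
Proof.
  intros Hv Hr. destruct (Req_dec v 0) as [->|Hv0]. rewrite rpow_0; lra.
  rewrite rpow_pos by lra. unfold Rpower.
  assert (ln v <= 0).
  { destruct (Req_dec v 1) as [->|]. rewrite ln_1; lra.
    left. rewrite <- ln_1. apply ln_increasing; lra. }
  rewrite <- (exp_ln v) at 2 by lra. apply exp_le_mono. nra.
Qed.

Lemma pow_le1 q n : 0 <= q <= 1 -> q ^ n <= 1.
Proof. intros Hq. induction n; simpl. lra. assert (0 <= q ^ n) by (apply pow_le; lra). nra. Qed.

Lemma pow_decr q a b : 0 <= q <= 1 -> (b <= a)%nat -> q ^ a <= q ^ b.
Proof.
  intros Hq Hab. replace a with (b + (a - b))%nat by lia. rewrite pow_add.
  assert (0 <= q ^ b) by (apply pow_le; lra). assert (q ^ (a-b) <= 1) by (apply pow_le1; auto).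
  assert (0 <= q ^ (a-b)) by (apply pow_le; lra). nra.
Qed.

Lemma exp_half_pow k : exp (- INR k) = exp (-/2) ^ k * exp (-/2) ^ k.
Proof.
  rewrite <- Rpower_pow by apply exp_pos. unfold Rpower. rewrite ln_exp, <- exp_plus.
  f_equal. lra.
Qed.

Lemma sum_ge0 (f : nat -> R) N : (forall n, 0 <= f n) -> 0 <= sum_f_R0 f N.
Proof. intros Hf. induction N; simpl. apply Hf. specialize (Hf (S N)). lra. Qed.

Lemma sum_term_le (f : nat -> R) k N : (forall n, 0 <= f n) -> (k <= N)%nat -> f k <= sum_f_R0 f N.
Proof.
  intros Hf H. induction N. replace k with 0%nat by lia. simpl; lra.
  destruct (Nat.eq_dec k (S N)) as [->|]. simpl.
  assert (0 <= sum_f_R0 f N) by now apply sum_ge0. lra.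
  simpl. specialize (IHN ltac:(lia)). specialize (Hf (S N)). lra.
Qed.

Lemma partial_le_Series (a : nat -> R) N : ex_series a -> (forall n, 0 <= a n) -> sum_f_R0 a N <= Series a.
Proof.
  intros He Ha. apply sum_incr; auto. apply is_series_Reals. now apply Series_correct.
Qed.

Lemma term_le_Series (a : nat -> R) k : ex_series a -> (forall n, 0 <= a n) -> a k <= Series a.
Proof.
  intros He Ha. eapply Rle_trans. apply (sum_term_le a k k); auto. now apply partial_le_Series.
Qed.

Lemma Series_ge0 (a : nat -> R) : ex_series a -> (forall n, 0 <= a n) -> 0 <= Series a.
Proof. intros He Ha. eapply Rle_trans. apply (Ha 0%nat). now apply (term_le_Series a 0). Qed.

Lemma geom_series q : 0 <= q < 1 -> ex_series (fun n => q ^ n) /\ Series (fun n => q ^ n) = / (1 - q).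
Proof.
  intros Hq. assert (H := is_series_geom q ltac:(rewrite Rabs_pos_eq; lra)).
  split. eexists; eauto. now apply is_series_unique.
Qed.

Lemma ex_series_bound (a : nat -> R) q B : 0 <= q < 1 -> (forall n, 0 <= a n <= B * q ^ n) -> ex_series a.
Proof.
  intros Hq Ha. apply (@ex_series_le R_AbsRing R_CompleteNormedModule _ (fun n => B * q ^ n)).
  intros n. unfold norm; simpl. unfold abs; simpl. rewrite Rabs_pos_eq; apply Ha.
  apply (ex_series_scal_l B (fun n => q ^ n)). apply geom_series; auto.
Qed.

Lemma glb_fin (E : R -> Prop) x0 : E x0 -> (forall x, E x -> 0 <= x) ->
  Glb_Rbar E = Finite (real (Glb_Rbar E)) /\ 0 <= real (Glb_Rbar E) /\
  (forall x, E x -> real (Glb_Rbar E) <= x).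
Proof.
  intros H0 Hpos. destruct (Glb_Rbar_correct E) as [Hlb Hgr].
  assert (Hx0 := Hlb x0 H0). assert (Hz := Hgr (Finite 0) (fun x Ex => Hpos x Ex)).
  destruct (Glb_Rbar E) as [g| |]; simpl in *; try contradiction.
  repeat split; auto; intros x Ex; exact (Hlb x Ex).
Qed.

Lemma glb_ge (E : R -> Prop) x0 c : E x0 -> (forall x, E x -> 0 <= x) ->
  (forall x, E x -> c <= x) -> c <= real (Glb_Rbar E).
Proof.
  intros H0 Hpos Hc. destruct (glb_fin E x0 H0 Hpos) as [Hf _].
  destruct (Glb_Rbar_correct E) as [_ Hgr]. assert (H := Hgr (Finite c) Hc).
  rewrite Hf in H. exact H.
Qed.

Lemma glb_approx (E : R -> Prop) x0 eps : E x0 -> (forall x, E x -> 0 <= x) -> 0 < eps ->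
  exists x, E x /\ x <= real (Glb_Rbar E) + eps.
Proof.
  intros H0 Hpos He. apply NNPP. intros Hn.
  assert (Hc : forall x, E x -> real (Glb_Rbar E) + eps <= x).
  { intros x Ex. apply Rnot_lt_le. intros Hlt. apply Hn. exists x; split; auto; lra. }
  assert (H := glb_ge E x0 _ H0 Hpos Hc). lra.
Qed.

Lemma Cdist_tri a b c : Cmod (Cminus a c) <= Cmod (Cminus a b) + Cmod (Cminus b c).
Proof.
  replace (Cminus a c) with (Cplus (Cminus a b) (Cminus b c)) by ring. apply Cmod_triangle.
Qed.

Lemma Cdist_sym a b : Cmod (Cminus a b) = Cmod (Cminus b a).
Proof. replace (Cminus a b) with (Copp (Cminus b a)) by ring. apply Cmod_opp. Qed.

Lemma Cdist_le2 a b : in_disk a -> in_disk b -> Cmod (Cminus a b) <= 2.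
Proof.
  unfold in_disk. intros Ha Hb. unfold Cminus.
  eapply Rle_trans. apply Cmod_triangle. rewrite Cmod_opp. lra.
Qed.

Lemma Cdist_self a : Cmod (Cminus a a) = 0.
Proof. replace (Cminus a a) with (RtoC 0) by ring. apply Cmod_0. Qed.

Lemma periodic_nat p (b : Z -> C) : periodic p b -> forall k n, b (n + Z.of_nat k * Z.of_nat p)%Z = b n.
Proof.
  intros Hp k. induction k; intros n. f_equal; lia.
  replace (n + Z.of_nat (S k) * Z.of_nat p)%Z with ((n + Z.of_nat k * Z.of_nat p) + Z.of_nat p)%Z by lia.
  rewrite Hp. apply IHk.
Qed.

Lemma periodic_Z p (b : Z -> C) : periodic p b -> forall q n, b (n + q * Z.of_nat p)%Z = b n.
Proof.
  intros Hp q n. destruct (Z_le_gt_dec 0 q).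
  replace q with (Z.of_nat (Z.to_nat q)) by lia. apply periodic_nat; auto.
  rewrite <- (periodic_nat p b Hp (Z.to_nat (- q)) (n + q * Z.of_nat p)%Z). f_equal. lia.
Qed.

Lemma window_rep p (i : nat) (n : Z) : (0 < p)%nat -> exists k : nat, (1 <= k <= p)%nat /\
  forall b, periodic p b -> b n = b (Z.of_nat (i + k)).
Proof.
  intros Hp. set (P := Z.of_nat p). set (r := ((n - Z.of_nat i - 1) mod P)%Z).
  assert (Hr : (0 <= r < P)%Z) by (apply Z.mod_pos_bound; lia).
  exists (Z.to_nat (r + 1)). split. lia.
  intros b Hb. assert (Hd := Z_div_mod_eq_full (n - Z.of_nat i - 1) P).
  replace n with (Z.of_nat (i + Z.to_nat (r + 1)) + ((n - Z.of_nat i - 1) / P) * P)%Z.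
  apply periodic_Z; auto. unfold r in *. lia.
Qed.

Definition wq := exp (- / 2).
Lemma wq_bounds : 0 < wq < 1.
Proof.
  unfold wq. split. apply exp_pos. rewrite <- exp_0. apply exp_increasing. lra.
Qed.

Lemma exp_le_wq k : exp (- INR k) <= wq ^ k.
Proof.
  rewrite exp_half_pow. fold wq. pose proof wq_bounds.
  assert (0 <= wq ^ k) by (apply pow_le; lra). assert (wq ^ k <= 1) by (apply pow_le1; lra). nra.
Qed.

Lemma iso_self p alpha0 : periodic p alpha0 -> (forall n, in_disk (alpha0 n)) -> iso_torus p alpha0 alpha0.
Proof. intros; repeat split; auto. Qed.

Lemma dm_terms_bound (alpha : nat -> C) (beta : Z -> C) m :
  (forall n, in_disk (alpha n)) -> (forall n, in_disk (beta n)) ->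
  forall k, 0 <= exp (- INR k) * Cmod (Cminus (alpha (m + k)%nat) (beta (Z.of_nat (m + k)))) <= 2 * wq ^ k.
Proof.
  intros Ha Hb k. assert (H1 := Cdist_le2 _ _ (Ha (m+k)%nat) (Hb (Z.of_nat (m+k)))).
  assert (H2 := Cmod_ge_0 (Cminus (alpha (m + k)%nat) (beta (Z.of_nat (m + k))))).
  assert (H3 := exp_le_wq k). assert (H4 := exp_pos (- INR k)). split; nra.
Qed.

Lemma dm_ex (alpha : nat -> C) (beta : Z -> C) m :
  (forall n, in_disk (alpha n)) -> (forall n, in_disk (beta n)) ->
  ex_series (fun k => exp (- INR k) * Cmod (Cminus (alpha (m + k)%nat) (beta (Z.of_nat (m + k))))).
Proof.
  intros Ha Hb. apply (ex_series_bound _ wq 2). pose proof wq_bounds; lra.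
  apply dm_terms_bound; auto.
Qed.

Lemma dm_ge0 (alpha : nat -> C) (beta : Z -> C) m :
  (forall n, in_disk (alpha n)) -> (forall n, in_disk (beta n)) -> 0 <= dm alpha beta m.
Proof.
  intros Ha Hb. unfold dm. apply Series_ge0. apply dm_ex; auto.
  intros k; apply dm_terms_bound; auto.
Qed.

Lemma dtm_ge0 p (alpha : nat -> C) (beta : Z -> C) m : 0 <= dtm p alpha beta m.
Proof. unfold dtm. apply sum_ge0. intros; apply Cmod_ge_0. Qed.

Lemma dtm_le p (alpha : nat -> C) (beta : Z -> C) m :
  (forall n, in_disk (alpha n)) -> (forall n, in_disk (beta n)) -> dtm p alpha beta m <= 2 * INR (S p).
Proof.
  intros Ha Hb. unfold dtm. eapply Rle_trans.
  apply (sum_Rle _ (fun _ => 2)). intros; apply Cdist_le2; auto.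
  rewrite sum_cte. lra.
Qed.

Lemma dm_lower p (alpha : nat -> C) (beta : Z -> C) m :
  (forall n, in_disk (alpha n)) -> (forall n, in_disk (beta n)) ->
  exp (- INR p) * dtm p alpha beta m <= dm alpha beta m.
Proof.
  intros Ha Hb. unfold dtm, dm. rewrite scal_sum.
  eapply Rle_trans. 2: apply partial_le_Series with (N := p).
  apply sum_Rle. intros k Hk. rewrite Rmult_comm. apply Rmult_le_compat_r. apply Cmod_ge_0.
  apply exp_le_mono. apply Ropp_le_contravar. apply le_INR; auto.
  apply dm_ex; auto. intros k; apply dm_terms_bound; auto.
Qed.

Lemma t_props p alpha0 (alpha : nat -> C) m :
  periodic p alpha0 -> (forall n, in_disk (alpha0 n)) -> (forall n, in_disk (alpha n)) ->
  0 <= dtm_torus p alpha0 alpha m <= 2 * INR (S p).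
Proof.
  intros Hp H0 Ha. unfold dtm_torus.
  destruct (glb_fin (fun x => exists beta, iso_torus p alpha0 beta /\ x = dtm p alpha beta m)
    (dtm p alpha alpha0 m)) as [_ [Hg Hle]].
  exists alpha0; split; auto; apply iso_self; auto.
  intros x [b [_ ->]]. apply dtm_ge0.
  split; auto. eapply Rle_trans. apply Hle. exists alpha0; split; auto; apply iso_self; auto.
  apply dtm_le; auto.
Qed.

Lemma d_ge0 p alpha0 (alpha : nat -> C) m :
  periodic p alpha0 -> (forall n, in_disk (alpha0 n)) -> (forall n, in_disk (alpha n)) ->
  0 <= dm_torus p alpha0 alpha m.
Proof.
  intros Hp H0 Ha. unfold dm_torus.
  destruct (glb_fin (fun x => exists beta, iso_torus p alpha0 beta /\ x = dm alpha beta m)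
    (dm alpha alpha0 m)) as [_ [Hg Hle]]; auto.
  exists alpha0; split; auto; apply iso_self; auto.
  intros x [b [[_ [Hb _]] ->]]. apply dm_ge0; auto.
Qed.

Lemma lower_pt p alpha0 (alpha : nat -> C) m :
  periodic p alpha0 -> (forall n, in_disk (alpha0 n)) -> (forall n, in_disk (alpha n)) ->
  exp (- INR p) * dtm_torus p alpha0 alpha m <= dm_torus p alpha0 alpha m.
Proof.
  intros Hp H0 Ha. unfold dm_torus.
  apply (glb_ge _ (dm alpha alpha0 m)).
  exists alpha0; split; auto; apply iso_self; auto.
  intros x [b [[_ [Hb _]] ->]]. apply dm_ge0; auto.
  intros x [b [Hbt ->]]. eapply Rle_trans. 2: apply dm_lower; auto.
  apply Rmult_le_compat_l. left; apply exp_pos.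
  unfold dtm_torus. destruct (glb_fin (fun x => exists beta, iso_torus p alpha0 beta /\ x = dtm p alpha beta m)
    (dtm p alpha alpha0 m)) as [_ [Hg Hle]].
  exists alpha0; split; auto; apply iso_self; auto.
  intros x [b' [_ ->]]. apply dtm_ge0.
  apply Hle. exists b; auto.
  destruct Hbt as [_ [Hb _]]; auto.
Qed.

Definition cw := / (1 - wq).
Lemma cw_pos : 0 < cw.
Proof. unfold cw. pose proof wq_bounds. apply Rinv_0_lt_compat. lra. Qed.
Lemma geom_wq : ex_series (fun n => wq ^ n) /\ Series (fun n => wq ^ n) = cw.
Proof. apply geom_series. pose proof wq_bounds. lra. Qed.

Lemma upper_eps p alpha0 (alpha : nat -> C) m eps :
  (0 < p)%nat -> periodic p alpha0 -> (forall n, in_disk (alpha0 n)) -> (forall n, in_disk (alpha n)) ->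
  0 < eps ->
  dm_torus p alpha0 alpha m <=
    2 * cw * Series (fun j => wq ^ j * dtm_torus p alpha0 alpha (m + j)) + 2 * eps * cw * cw.
Proof.
  intros Hp0 Hp H0 Ha He.
  set (t := fun i => dtm_torus p alpha0 alpha i).
  assert (Hch : forall i, exists b, iso_torus p alpha0 b /\ dtm p alpha b i <= t i + eps).
  { intros i. destruct (glb_approx (fun x => exists beta, iso_torus p alpha0 beta /\ x = dtm p alpha beta i)
      (dtm p alpha alpha0 i) eps) as [x [[b [Hb ->]] Hx]]; auto.
    exists alpha0; split; auto; apply iso_self; auto.
    intros x [b [_ ->]]. apply dtm_ge0.
    exists b; split; auto. }
  destruct (functional_choice _ Hch) as [bs Hbs].
  set (a := fun i => dtm p alpha (bs i) i).
  assert (Hper : forall i, periodic p (bs i)) by (intros i; apply (Hbs i)).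
  assert (Hdk : forall i n, in_disk (bs i n)) by (intros i; apply (Hbs i)).
  assert (Hterm : forall i k, (k <= p)%nat ->
     Cmod (Cminus (alpha (i + k)%nat) (bs i (Z.of_nat (i + k)))) <= a i).
  { intros i k Hk. unfold a, dtm.
    apply (sum_term_le (fun k => Cmod (Cminus (alpha (i + k)%nat) (bs i (Z.of_nat (i + k)))))); auto.
    intros; apply Cmod_ge_0. }
  assert (Hstep : forall i n, Cmod (Cminus (bs i n) (bs (S i) n)) <= a i + a (S i)).
  { intros i n. destruct (window_rep p i n Hp0) as [k [Hk Hrep]].
    rewrite (Hrep _ (Hper i)), (Hrep _ (Hper (S i))).
    eapply Rle_trans. apply (Cdist_tri _ (alpha (i + k)%nat)).
    rewrite Cdist_sym. apply Rplus_le_compat. apply Hterm; lia.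
    assert (H := Hterm (S i) (k - 1)%nat ltac:(lia)).
    replace (S i + (k - 1))%nat with (i + k)%nat in H by lia. exact H. }
  assert (Hchain : forall k n, Cmod (Cminus (bs m n) (bs (m + k)%nat n)) <=
            2 * sum_f_R0 (fun j => a (m + j)%nat) k - a (m + k)%nat).
  { induction k; intros n.
    - simpl. rewrite Nat.add_0_r, Cdist_self. assert (0 <= a m) by apply dtm_ge0. lra.
    - eapply Rle_trans. apply (Cdist_tri _ (bs (m + k)%nat n)).
      replace (m + S k)%nat with (S (m + k)) by lia.
      assert (H := Hstep (m + k)%nat n). specialize (IHk n). simpl.
      replace (m + S k)%nat with (S (m + k)) by lia. lra. }
  assert (Hpt : forall k, Cmod (Cminus (alpha (m + k)%nat) (bs m (Z.of_nat (m + k)))) <=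
            2 * sum_f_R0 (fun j => a (m + j)%nat) k).
  { intros k. eapply Rle_trans. apply (Cdist_tri _ (bs (m + k)%nat (Z.of_nat (m + k)))).
    assert (H1 := Hterm (m + k)%nat 0%nat ltac:(lia)). rewrite Nat.add_0_r in H1.
    rewrite (Cdist_sym (bs (m + k)%nat _)). assert (H2 := Hchain k (Z.of_nat (m + k))). lra. }
  set (b := fun j => t (m + j)%nat + eps).
  assert (Hb : forall j, 0 <= b j <= 2 * INR (S p) + eps).
  { intros j. unfold b, t. pose proof (t_props p alpha0 alpha (m + j) Hp H0 Ha). lra. }
  pose proof wq_bounds as Hw.
  assert (HexU : ex_series (fun j => wq ^ j * b j)).
  { apply (ex_series_bound _ wq (2 * INR (S p) + eps)). lra.
    intros j. specialize (Hb j). assert (0 <= wq ^ j) by (apply pow_le; lra). split; nra. }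
  set (U := Series (fun j => wq ^ j * b j)).
  assert (HU0 : 0 <= U).
  { apply Series_ge0; auto. intros j. specialize (Hb j). assert (0 <= wq ^ j) by (apply pow_le; lra). nra. }
  assert (Hterm2 : forall k, exp (- INR k) * Cmod (Cminus (alpha (m + k)%nat) (bs m (Z.of_nat (m + k))))
                    <= (2 * U) * wq ^ k).
  { intros k. rewrite exp_half_pow. fold wq.
    assert (Hs : sum_f_R0 (fun j => a (m + j)%nat) k <= sum_f_R0 b k).
    { apply sum_Rle. intros j _. unfold a, b. apply Hbs. }
    assert (Hs2 : wq ^ k * sum_f_R0 b k <= U).
    { rewrite scal_sum. eapply Rle_trans. 2: apply partial_le_Series with (N := k); auto.
      apply sum_Rle. intros j Hj. rewrite Rmult_comm. apply Rmult_le_compat_r. apply Hb.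
      apply pow_decr; auto; lra.
      intros j. specialize (Hb j). assert (0 <= wq ^ j) by (apply pow_le; lra). nra. }
    specialize (Hpt k). assert (0 <= wq ^ k) by (apply pow_le; lra).
    assert (0 <= Cmod (Cminus (alpha (m + k)%nat) (bs m (Z.of_nat (m + k))))) by apply Cmod_ge_0.
    assert (wq ^ k * Cmod (Cminus (alpha (m + k)%nat) (bs m (Z.of_nat (m + k)))) <= 2 * U) by nra.
    nra. }
  assert (Hdm : dm alpha (bs m) m <= 2 * U * cw).
  { unfold dm. destruct geom_wq as [Hg1 Hg2]. rewrite <- Hg2, <- Series_scal_l.
    apply Series_le. intros k. split. apply dm_terms_bound; auto. apply Hterm2.
    apply (ex_series_scal_l (2 * U) (fun n => wq ^ n)); auto. }
  assert (HUe : U = Series (fun j => wq ^ j * dtm_torus p alpha0 alpha (m + j)) + eps * cw).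
  { destruct geom_wq as [Hg1 Hg2].
    assert (Hex1 : ex_series (fun j => wq ^ j * dtm_torus p alpha0 alpha (m + j))).
    { apply (ex_series_bound _ wq (2 * INR (S p))). lra.
      intros j. pose proof (t_props p alpha0 alpha (m + j) Hp H0 Ha).
      assert (0 <= wq ^ j) by (apply pow_le; lra). split; nra. }
    unfold U. rewrite <- Hg2, <- Series_scal_l, <- Series_plus; auto.
    apply Series_ext. intros j. unfold b, t. ring.
    apply (ex_series_scal_l eps (fun n => wq ^ n)); auto. }
  assert (Hd : dm_torus p alpha0 alpha m <= dm alpha (bs m) m).
  { unfold dm_torus. destruct (glb_fin (fun x => exists beta, iso_torus p alpha0 beta /\ x = dm alpha beta m)
      (dm alpha alpha0 m)) as [_ [_ Hle]].
    exists alpha0; split; auto; apply iso_self; auto.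
    intros x [b' [[_ [Hb' _]] ->]]. apply dm_ge0; auto.
    apply Hle. exists (bs m); split; [apply Hbs|reflexivity]. }
  rewrite HUe in Hdm. eapply Rle_trans. apply Hd. eapply Rle_trans. apply Hdm. unfold t. right; ring.
Qed.

Lemma upper_pt p alpha0 (alpha : nat -> C) m :
  (0 < p)%nat -> periodic p alpha0 -> (forall n, in_disk (alpha0 n)) -> (forall n, in_disk (alpha n)) ->
  dm_torus p alpha0 alpha m <=
    2 * cw * Series (fun j => wq ^ j * dtm_torus p alpha0 alpha (m + j)).
Proof.
  intros Hp0 Hp H0 Ha. set (S := Series _).
  apply Rnot_lt_le. intros Hlt. pose proof cw_pos.
  set (eps := (dm_torus p alpha0 alpha m - 2 * cw * S) / (4 * cw * cw)).
  assert (He : 0 < eps). { unfold eps. apply Rdiv_lt_0_compat; nra. }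
  assert (HH := upper_eps p alpha0 alpha m eps Hp0 Hp H0 Ha He). fold S in HH.
  assert (Hx : 2 * eps * cw * cw = (dm_torus p alpha0 alpha m - 2 * cw * S) / 2).
  { unfold eps. field. lra. }
  lra.
Qed.

Lemma Rbar_mult_pinf c : 0 < c -> Rbar_mult (Finite c) p_infty = p_infty.
Proof.
  intros H. simpl. destruct (Rle_dec 0 c); [|lra].
  destruct (Rle_lt_or_eq_dec 0 c r); [reflexivity|lra].
Qed.

Definition Sp (x : nat -> R) r N := sum_f_R0 (fun m => rpow (x m) r) N.

Lemma sum_mono (f : nat -> R) M N : (forall n, 0 <= f n) -> (M <= N)%nat -> sum_f_R0 f M <= sum_f_R0 f N.
Proof.
  intros Hf H. induction N. replace M with 0%nat by lia; lra.
  destruct (Nat.eq_dec M (S N)) as [->|]. lra.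
  simpl. specialize (IHN ltac:(lia)). specialize (Hf (S N)). lra.
Qed.

Lemma Sp_lim_ge0 x r : Rbar_le (Finite 0) (Lim_seq (Sp x r)).
Proof.
  rewrite <- (Lim_seq_const 0). apply Lim_seq_le_loc. exists 0%nat. intros n _.
  apply sum_ge0. intros; apply rpow_ge0.
Qed.

Lemma Sp_le_lim x r M T : Lim_seq (Sp x r) = Finite T -> Sp x r M <= T.
Proof.
  intros HT. assert (H : Rbar_le (Lim_seq (fun _ => Sp x r M)) (Lim_seq (Sp x r))).
  { apply Lim_seq_le_loc. exists M. intros n Hn. apply sum_mono; auto. intros; apply rpow_ge0. }
  rewrite Lim_seq_const, HT in H. exact H.
Qed.

Lemma lq_low_fin (x y : nat -> R) c r : 0 < c -> 0 < r -> (forall m, 0 <= x m) -> (forall m, c * x m <= y m) ->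
  Rbar_le (Rbar_mult (Finite c) (Rbar_rpow (Lim_seq (Sp x r)) (/ r))) (Rbar_rpow (Lim_seq (Sp y r)) (/ r)).
Proof.
  intros Hc Hr Hx Hxy.
  assert (H : Rbar_le (Rbar_mult (rpow c r) (Lim_seq (Sp x r))) (Lim_seq (Sp y r))).
  { rewrite <- Lim_seq_scal_l. apply Lim_seq_le_loc. exists 0%nat. intros n _.
    unfold Sp. rewrite scal_sum. apply sum_Rle. intros m _. rewrite Rmult_comm, <- rpow_mult by (auto; lra).
    apply rpow_le; auto. split. specialize (Hx m). nra. auto. }
  assert (H0 := Sp_lim_ge0 x r).
  destruct (Lim_seq (Sp x r)) as [L| |]; simpl in H0; try contradiction.
  - destruct (Lim_seq (Sp y r)) as [M| |]; simpl in H.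
    + simpl. assert (rpow c r * L <= M).
      { revert H. unfold Rbar_mult. simpl. auto. }
      rewrite <- (rpow_inv c r) at 1 by (auto; lra). rewrite <- rpow_mult by (auto; apply rpow_ge0).
      apply rpow_le. apply Rinv_0_lt_compat; auto. split; auto.
      assert (0 <= rpow c r) by apply rpow_ge0. nra.
    + simpl. auto.
    + simpl in H. contradiction.
  - assert (Hp : 0 < rpow c r). { rewrite rpow_pos by auto. unfold Rpower. apply exp_pos. }
    rewrite Rbar_mult_pinf in H by auto.
    destruct (Lim_seq (Sp y r)); simpl in H; try contradiction. replace (Rbar_rpow p_infty (/ r)) with p_infty by reflexivity. rewrite Rbar_mult_pinf by auto. simpl; auto.
Qed.

Lemma lq_up_fin (x y : nat -> R) C' r : 0 < C' -> 0 < r ->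
  (forall N T, Lim_seq (Sp x r) = Finite T -> Sp y r N <= C' * T) ->
  Rbar_le (Rbar_rpow (Lim_seq (Sp y r)) (/ r)) (Rbar_mult (Finite (rpow C' (/ r))) (Rbar_rpow (Lim_seq (Sp x r)) (/ r))).
Proof.
  intros HC Hr H.
  assert (H0 := Sp_lim_ge0 x r). assert (H0y := Sp_lim_ge0 y r).
  assert (Hp : 0 < rpow C' (/ r)). { rewrite rpow_pos by auto. unfold Rpower. apply exp_pos. }
  destruct (Lim_seq (Sp x r)) as [T| |] eqn:ET; simpl in H0; try contradiction.
  - assert (Hy : Rbar_le (Lim_seq (Sp y r)) (Lim_seq (fun _ => C' * T))).
    { apply Lim_seq_le_loc. exists 0%nat. intros n _. apply H; auto. }
    rewrite Lim_seq_const in Hy.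
    destruct (Lim_seq (Sp y r)) as [M| |]; simpl in Hy, H0y; try contradiction.
    simpl. rewrite <- rpow_mult by (auto; lra). apply rpow_le. apply Rinv_0_lt_compat; auto. split; auto.
  - replace (Rbar_rpow p_infty (/ r)) with p_infty by reflexivity. rewrite Rbar_mult_pinf by auto. destruct (Rbar_rpow (Lim_seq (Sp y r)) (/ r)); simpl; auto.
Qed.

Definition uq := exp (- / 4).
Lemma uq_bounds : 0 < uq < 1.
Proof. unfold uq. split. apply exp_pos. rewrite <- exp_0. apply exp_increasing. lra. Qed.
Lemma wq_uq : wq = uq * uq.
Proof. unfold wq, uq. rewrite <- exp_plus. f_equal. lra. Qed.
Definition cu := / (1 - uq).
Lemma cu_pos : 0 < cu.
Proof. unfold cu. pose proof uq_bounds. apply Rinv_0_lt_compat. lra. Qed.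
Lemma geom_uq : ex_series (fun n => uq ^ n) /\ Series (fun n => uq ^ n) = cu.
Proof. apply geom_series. pose proof uq_bounds. lra. Qed.

Lemma conv_bound (x : nat -> R) B r m : 1 <= r -> (forall n, 0 <= x n <= B) ->
  rpow (Series (fun j => wq ^ j * x (m + j)%nat)) r <=
  rpow cu r * Series (fun i => uq ^ i * rpow (x (m + i)%nat) r).
Proof.
  intros Hr Hx. pose proof uq_bounds as Hu. pose proof wq_bounds as Hw.
  assert (Hpu : forall i, 0 <= uq ^ i <= 1) by (intros; split; [apply pow_le; lra | apply pow_le1; lra]).
  assert (Hpw : forall i, 0 <= wq ^ i) by (intros; apply pow_le; lra).
  assert (HexZ : ex_series (fun i => uq ^ i * rpow (x (m + i)%nat) r)).
  { apply (ex_series_bound _ uq (rpow B r)). lra. intros i.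
    assert (0 <= rpow (x (m + i)%nat) r) by apply rpow_ge0.
    assert (rpow (x (m + i)%nat) r <= rpow B r) by (apply rpow_le; [lra| apply Hx]).
    specialize (Hpu i). split; nra. }
  assert (HZt : forall i, 0 <= uq ^ i * rpow (x (m + i)%nat) r).
  { intros i. specialize (Hpu i). assert (0 <= rpow (x (m + i)%nat) r) by apply rpow_ge0. nra. }
  set (Z := Series (fun i => uq ^ i * rpow (x (m + i)%nat) r)).
  assert (HZ : 0 <= Z) by (apply Series_ge0; auto).
  set (M := rpow Z (/ r)).
  assert (HM : 0 <= M) by apply rpow_ge0.
  assert (Hj : forall j, uq ^ j * x (m + j)%nat <= M).
  { intros j. specialize (Hx (m + j)%nat). specialize (Hpu j).
    apply (rpow_le_inv _ _ r). lra. nra. auto.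
    unfold M. rewrite rpow_inv' by (auto; lra).
    rewrite rpow_mult by (lra).
    eapply Rle_trans. 2: apply (term_le_Series _ j HexZ HZt).
    apply Rmult_le_compat_r. apply rpow_ge0. apply rpow_small; auto. }
  assert (Hex : ex_series (fun j => wq ^ j * x (m + j)%nat)).
  { apply (ex_series_bound _ wq B). lra. intros j. specialize (Hx (m + j)%nat).
    specialize (Hpw j). split; nra. }
  assert (HS : Series (fun j => wq ^ j * x (m + j)%nat) <= cu * M).
  { destruct geom_uq as [Hg1 Hg2]. rewrite <- Hg2, Rmult_comm, <- Series_scal_l.
    apply Series_le. intros j. rewrite wq_uq, Rpow_mult_distr. specialize (Hj j). specialize (Hx (m + j)%nat).
    specialize (Hpu j). split; nra.
    apply (ex_series_ext (fun n => scal M (uq ^ n))). intros n. reflexivity.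
    apply (@ex_series_scal_l R_AbsRing R_NormedModule); auto. }
  eapply Rle_trans. apply rpow_le. lra. split. apply Series_ge0; auto.
  intros j. specialize (Hx (m + j)%nat). specialize (Hpw j). nra. exact HS.
  rewrite rpow_mult. unfold M. rewrite rpow_inv' by (auto; lra). lra.
  left; apply cu_pos. auto.
Qed.

Lemma sum_series_swap (g : nat -> nat -> R) N : (forall m, ex_series (g m)) ->
  ex_series (fun i => sum_f_R0 (fun m => g m i) N) /\
  Series (fun i => sum_f_R0 (fun m => g m i) N) = sum_f_R0 (fun m => Series (g m)) N.
Proof.
  intros Hg. induction N; simpl.
  - split. apply (Hg 0%nat). reflexivity.
  - destruct IHN as [He Hs]. split.
    + apply (ex_series_ext (fun i => plus (sum_f_R0 (fun m => g m i) N) (g (S N) i))).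
      intros; reflexivity. apply (@ex_series_plus R_AbsRing R_NormedModule); auto.
    + rewrite Series_plus; auto. now rewrite Hs.
Qed.

Lemma shift_sum (f : nat -> R) i N : (forall n, 0 <= f n) ->
  sum_f_R0 (fun m => f (m + i)%nat) N <= sum_f_R0 f (N + i).
Proof.
  intros Hf. induction N; simpl.
  - apply sum_term_le; auto.
  - replace (S (N + i)) with (S N + i)%nat by lia. simpl. lra.
Qed.

Lemma scal_sum_l (An : nat -> R) N x : sum_f_R0 (fun i => x * An i) N = x * sum_f_R0 An N.
Proof. rewrite scal_sum. apply sum_eq. intros; ring. Qed.

Lemma lq_up_fin_main (t d : nat -> R) K B r : 1 <= r -> 0 < K ->
  (forall n, 0 <= t n <= B) ->
  (forall m, 0 <= d m <= K * Series (fun j => wq ^ j * t (m + j)%nat)) ->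
  forall N T, Lim_seq (Sp t r) = Finite T -> Sp d r N <= (rpow K r * rpow cu r * cu) * T.
Proof.
  intros Hr HK Ht Hd N T HT.
  pose proof uq_bounds as Hu. pose proof wq_bounds as Hw.
  assert (Hpu : forall i, 0 <= uq ^ i <= 1) by (intros; split; [apply pow_le; lra | apply pow_le1; lra]).
  set (g := fun m i => uq ^ i * rpow (t (m + i)%nat) r).
  assert (Hg : forall m, ex_series (g m)).
  { intros m. apply (ex_series_bound _ uq (rpow B r)). lra. intros i. unfold g.
    assert (0 <= rpow (t (m + i)%nat) r) by apply rpow_ge0.
    assert (rpow (t (m + i)%nat) r <= rpow B r) by (apply rpow_le; [lra| apply Ht]).
    specialize (Hpu i). split; nra. }
  assert (HT0 : 0 <= T).
  { assert (H := Sp_lim_ge0 t r). rewrite HT in H. exact H. }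
  unfold Sp. eapply Rle_trans.
  apply (sum_Rle _ (fun m => (rpow K r * rpow cu r) * Series (g m))).
  { intros m _. assert (Hex : ex_series (fun j => wq ^ j * t (m + j)%nat)).
    { apply (ex_series_bound _ wq B). lra. intros j. specialize (Ht (m + j)%nat).
      assert (0 <= wq ^ j) by (apply pow_le; lra). split; nra. }
    assert (HS0 : 0 <= Series (fun j => wq ^ j * t (m + j)%nat)).
    { apply Series_ge0; auto. intros j. specialize (Ht (m + j)%nat).
      assert (0 <= wq ^ j) by (apply pow_le; lra). nra. }
    eapply Rle_trans. apply rpow_le. lra. apply (Hd m).
    rewrite rpow_mult by lra. rewrite Rmult_assoc. apply Rmult_le_compat_l. apply rpow_ge0.
    apply (conv_bound t B r m); auto. }
  rewrite scal_sum_l.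
  destruct (sum_series_swap g N Hg) as [Hex Hs]. rewrite <- Hs.
  rewrite (Rmult_assoc _ cu T). apply Rmult_le_compat_l.
  { assert (0 <= rpow K r) by apply rpow_ge0. assert (0 <= rpow cu r) by apply rpow_ge0. nra. }
  destruct geom_uq as [Hg1 Hg2]. rewrite <- Hg2, Rmult_comm, <- Series_scal_l.
  apply Series_le.
  - intros i. split. apply sum_ge0. intros m. unfold g. specialize (Hpu i).
    assert (0 <= rpow (t (m + i)%nat) r) by apply rpow_ge0. nra.
    unfold g. rewrite scal_sum_l. rewrite Rmult_comm. apply Rmult_le_compat_r. apply Hpu.
    eapply Rle_trans. apply (shift_sum (fun n => rpow (t n) r)). intros; apply rpow_ge0.
    apply (Sp_le_lim t r). auto.
  - apply (ex_series_ext (fun n => scal T (uq ^ n))). intros n. reflexivity.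
    apply (@ex_series_scal_l R_AbsRing R_NormedModule); auto.
Qed.

Lemma lq_low_inf (x y : nat -> R) c : 0 < c -> (forall m, 0 <= x m) -> (forall m, c * x m <= y m) ->
  Rbar_le (Rbar_mult (Finite c) (Lub_Rbar (fun z => exists m, z = x m))) (Lub_Rbar (fun z => exists m, z = y m)).
Proof.
  intros Hc Hx Hxy.
  destruct (Lub_Rbar_correct (fun z => exists m, z = y m)) as [Huby Hly].
  destruct (Lub_Rbar_correct (fun z => exists m, z = x m)) as [Hubx Hlx].
  assert (Hy0 := Huby (y 0%nat) (ex_intro _ 0%nat eq_refl)).
  assert (Hx0 := Hubx (x 0%nat) (ex_intro _ 0%nat eq_refl)).
  destruct (Lub_Rbar (fun z => exists m, z = y m)) as [Y| |].
  - assert (HX := Hlx (Finite (Y / c))).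
    assert (Hub : is_ub_Rbar (fun z => exists m, z = x m) (Y / c)).
    { intros z [m ->]. simpl. specialize (Huby (y m) (ex_intro _ m eq_refl)). simpl in Huby.
      specialize (Hxy m). apply Rmult_le_reg_l with c; auto. field_simplify; lra. }
    specialize (HX Hub).
    destruct (Lub_Rbar (fun z => exists m, z = x m)) as [X| |]; simpl in HX, Hx0; try contradiction.
    simpl.
    apply Rle_trans with (c * (Y / c)). apply Rmult_le_compat_l; lra. right; field; lra.
  - destruct (Rbar_mult (Finite c) (Lub_Rbar (fun z => exists m, z = x m))); simpl; auto.
  - simpl in Hy0. contradiction.
Qed.

Lemma lq_up_inf (t d : nat -> R) K B : 0 < K -> (forall n, 0 <= t n <= B) ->
  (forall m, 0 <= d m <= K * Series (fun j => wq ^ j * t (m + j)%nat)) ->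
  Rbar_le (Lub_Rbar (fun z => exists m, z = d m)) (Rbar_mult (Finite (K * cw)) (Lub_Rbar (fun z => exists m, z = t m))).
Proof.
  intros HK Ht Hd. pose proof wq_bounds as Hw. pose proof cw_pos.
  destruct (Lub_Rbar_correct (fun z => exists m, z = t m)) as [Hubx Hlx].
  assert (Hx0 := Hubx (t 0%nat) (ex_intro _ 0%nat eq_refl)).
  assert (HubB : is_ub_Rbar (fun z => exists m, z = t m) B).
  { intros z [m ->]. apply Ht. }
  assert (HB := Hlx (Finite B) HubB).
  destruct (Lub_Rbar (fun z => exists m, z = t m)) as [X| |]; simpl in HB, Hx0; try contradiction.
  destruct (Lub_Rbar_correct (fun z => exists m, z = d m)) as [_ Hly].
  simpl. apply (Hly (Finite (K * cw * X))).
  intros z [m ->]. simpl. eapply Rle_trans. apply Hd.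
  rewrite Rmult_assoc. apply Rmult_le_compat_l. lra.
  destruct geom_wq as [Hg1 Hg2]. rewrite <- Hg2, Rmult_comm, <- Series_scal_l.
  apply Series_le.
  - intros j. specialize (Ht (m + j)%nat). assert (0 <= wq ^ j) by (apply pow_le; lra).
    specialize (Hubx (t (m + j)%nat) (ex_intro _ _ eq_refl)). simpl in Hubx. split; nra.
  - apply (ex_series_ext (fun n => scal X (wq ^ n))). intros n. reflexivity.
    apply (@ex_series_scal_l R_AbsRing R_NormedModule); auto.
Qed.

Lemma rpow_gt0 x r : 0 < x -> 0 < rpow x r.
Proof. intros H. rewrite rpow_pos by auto. unfold Rpower. apply exp_pos. Qed.

Theorem proposition4p6 (p : nat) (alpha0 : Z -> C) (q : Rbar) :
  Nat.Even p -> (0 < p)%nat ->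
  periodic p alpha0 -> (forall n, in_disk (alpha0 n)) ->
  Rbar_le (Finite 1) q ->
  exists Cst : R, 0 < Cst /\
    forall alpha : nat -> C, (forall n, in_disk (alpha n)) ->
      Rbar_le (Rbar_mult (Finite (exp (- INR p))) (lq_norm q (dtm_torus p alpha0 alpha)))
              (lq_norm q (dm_torus p alpha0 alpha)) /\
      Rbar_le (lq_norm q (dm_torus p alpha0 alpha))
              (Rbar_mult (Finite Cst) (lq_norm q (dtm_torus p alpha0 alpha))).
Proof.
  intros _ Hp0 Hper H0 Hq.
  pose proof cw_pos as Hcw. pose proof cu_pos as Hcu.
  assert (HK : 0 < 2 * cw) by lra.
  destruct q as [r| |]; simpl in Hq; try contradiction.
  - exists (rpow (rpow (2 * cw) r * rpow cu r * cu) (/ r)).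
    assert (HC' : 0 < rpow (2 * cw) r * rpow cu r * cu).
    { assert (H1 := rpow_gt0 (2 * cw) r HK). assert (H2 := rpow_gt0 cu r Hcu).
      apply Rmult_lt_0_compat; auto. apply Rmult_lt_0_compat; auto. }
    split. apply rpow_gt0; auto.
    intros alpha Ha. split.
    + apply (lq_low_fin (dtm_torus p alpha0 alpha) (dm_torus p alpha0 alpha)).
      apply exp_pos. lra.
      intros m; apply t_props; auto.
      intros m; apply lower_pt; auto.
    + apply (lq_up_fin (dtm_torus p alpha0 alpha) (dm_torus p alpha0 alpha)); auto. lra.
      apply (lq_up_fin_main _ _ (2 * cw) (2 * INR (S p))); auto.
      intros n; apply t_props; auto.
      intros m; split. apply d_ge0; auto. apply upper_pt; auto.
  - exists (2 * cw * cw). split. nra.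
    intros alpha Ha. split.
    + apply (lq_low_inf (dtm_torus p alpha0 alpha) (dm_torus p alpha0 alpha)).
      apply exp_pos.
      intros m; apply t_props; auto.
      intros m; apply lower_pt; auto.
    + apply (lq_up_inf _ _ (2 * cw) (2 * INR (S p))); auto.
      intros n; apply t_props; auto.
      intros m; split. apply d_ge0; auto. apply upper_pt; auto.
Qed.
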